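(* Let $H$ be a matroid that is vertically connected but not vertically $3$-connected, and let $z$ be an element of $H$ such that $H/z$ is vertically $3$-connected. If $A$ is a minimal (under inclusion) vertical $2$-separating set of $H$ containing $z$, then $A$ is a cocircuit of $H$ of rank $2$.
   Context: For $A\subseteq E(H)$, $\lambda_H(A)=r_H(A)+r_H(E(H)-A)-r(H)$. A partition $\{A,B\}$ of $E(H)$ is a vertical $k$-separation if $\lambda_H(A)\le k-1$ and $r_H(A),r_H(B)\ge k$; a vertical $2$-separating set is a set $A$ such that $\{A,E(H)-A\}$ is a vertical $2$-separation. $H$ is vertically connected if it has no vertical $1$-separation, and vertically $3$-connected if it has no vertical $1$- or $2$-separation. *)

(* Defs.v *)
From mathcomp Require Import all_boot.
Set Implicit Arguments. Unset Strict Implicit. Unset Printing Implicit Defensive.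

Definition is_matroid (T : finType) (E : {set T}) (r : {set T} -> nat) : Prop :=
  [/\ forall X : {set T}, X \subset E -> r X <= #|X|,
      forall X Y : {set T}, X \subset Y -> Y \subset E -> r X <= r Y &
      forall X Y : {set T}, X \subset E -> Y \subset E ->
        r (X :|: Y) + r (X :&: Y) <= r X + r Y].

Definition lambda (T : finType) (E : {set T}) (r : {set T} -> nat) (A : {set T}) : nat :=
  r A + r (E :\: A) - r E.

Definition vert_sep (T : finType) (E : {set T}) (r : {set T} -> nat) (k : nat)
  (A : {set T}) : Prop :=
  [/\ A \subset E, lambda E r A <= k - 1, k <= r A & k <= r (E :\: A)].

Definition vert_2sep_set (T : finType) (E : {set T}) (r : {set T} -> nat)
  (A : {set T}) : Prop := vert_sep E r 2 A.

Definition vert_connected (T : finType) (E : {set T}) (r : {set T} -> nat) : Prop :=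
  forall A : {set T}, ~ vert_sep E r 1 A.

Definition vert_3connected (T : finType) (E : {set T}) (r : {set T} -> nat) : Prop :=
  forall A : {set T}, ~ vert_sep E r 1 A /\ ~ vert_sep E r 2 A.

Definition contr_ground (T : finType) (E : {set T}) (z : T) : {set T} := E :\ z.
Definition contr_rank (T : finType) (r : {set T} -> nat) (z : T) : {set T} -> nat :=
  fun X => r (X :|: [set z]) - r [set z].

Definition dual_rank (T : finType) (E : {set T}) (r : {set T} -> nat) : {set T} -> nat :=
  fun X => #|X| + r (E :\: X) - r E.

Definition circuit (T : finType) (E : {set T}) (r : {set T} -> nat) (C : {set T}) : Prop :=
  [/\ C \subset E, r C < #|C| &
      forall D : {set T}, D \proper C -> r D = #|D|].

Definition cocircuit (T : finType) (E : {set T}) (r : {set T} -> nat) (C : {set T}) : Prop :=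
  circuit E (dual_rank E r) C.

(* Main.v *)
Require Import Defs.
From mathcomp Require Import all_boot.
From mathcomp Require Import zify.

Theorem lemma3p3 (T : finType) (E : {set T}) (r : {set T} -> nat) (z : T)
  (A : {set T}) :
  is_matroid E r ->
  vert_connected E r ->
  ~ vert_3connected E r ->
  z \in E ->
  vert_3connected (contr_ground E z) (contr_rank r z) ->
  vert_2sep_set E r A -> z \in A ->
  (forall B : {set T}, B \proper A -> z \in B -> ~ vert_2sep_set E r B) ->
  cocircuit E r A /\ r A = 2.
Proof.
move=> [R1 R2 R3] Hvc _ zE H3 [AE lA a2 b2] zA Hmin.
rewrite /lambda in lA.
set B := E :\: A in lA b2 *.
have BE : B \subset E by apply: subsetDl.
have r0 : r set0 = 0.
  by have := R1 set0 (sub0set E); rewrite cards0; lia.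
have zsE : [set z] \subset E by rewrite sub1set.
have rz1 : r [set z] <= 1 by have := R1 _ zsE; rewrite cards1.
have hAE : forall y, y \in A -> y \in E by move=> y; apply: (subsetP AE).
have UAB : A :|: B = E.
  apply/setP=> y; rewrite !inE; have := hAE y; case: (y \in A) => //= ->; by [].
have IAB : A :&: B = set0.
  apply/setP=> y; rewrite !inE; case: (y \in A); by rewrite ?andbF.
have sAB := R3 _ _ AE BE; rewrite UAB IAB r0 in sAB.
have BzE : B :|: [set z] \subset E by rewrite subUset BE zsE.
have sBz := R3 _ _ BE zsE.
have IBz : B :&: [set z] = set0.
  apply/setP=> y; rewrite !inE; case: (eqVneq y z) => [->|]; by rewrite ?zA ?andbF.
rewrite IBz r0 in sBz.
have mB := R2 _ _ (subsetUl B [set z]) BzE.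
have mz := R2 _ _ (subsetUr B [set z]) BzE.
have mAz : r [set z] <= r A by apply: R2 => //; rewrite sub1set.
have UABz : A :|: (B :|: [set z]) = E.
  by rewrite setUA UAB; apply/setP=> y; rewrite !inE; case: (eqVneq y z) => [->|]; rewrite ?zE ?orbF ?orbT.
have IABz : A :&: (B :|: [set z]) = [set z].
  apply/setP=> y; rewrite !inE; case: (eqVneq y z) => [->|]; rewrite ?zA //=.
  by case: (y \in A); rewrite ?andbF.
have sABz := R3 _ _ AE BzE; rewrite UABz IABz in sABz.
have mAE := R2 _ _ AE (subxx E).
have mBzE := R2 _ _ BzE (subxx E).
have mBE := R2 _ _ BE (subxx E).
have [N1 N2] := H3 (A :\ z).
have e1 : contr_ground E z :\: (A :\ z) = B.
  apply/setP=> y; rewrite /contr_ground /B !inE; case: (eqVneq y z) => [->|]; rewrite ?zA //=.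
have e2 : A :\ z :|: [set z] = A.
  apply/setP=> y; rewrite !inE; case: (eqVneq y z) => [->|]; rewrite ?zA ?orbF //=.
have e3 : contr_ground E z :|: [set z] = E.
  apply/setP=> y; rewrite /contr_ground !inE; case: (eqVneq y z) => [->|]; rewrite ?zE ?orbF //=.
have sub' : A :\ z \subset contr_ground E z by apply: setSD.
rewrite /vert_sep /lambda e1 /contr_rank e2 e3 in N1 N2.
set a := r A in N1 N2 sAB sABz mAz mAE lA a2 *.
set b := r B in N1 N2 sAB sBz mB mBE lA b2 *.
set e := r E in N1 N2 sAB sABz mAE mBE mBzE lA *.
set c := r [set z] in N1 N2 rz1 sBz mz mAz sABz.
set d := r (B :|: [set z]) in N1 N2 sBz mB mz sABz mBzE.
have N1' : ~ ((a - c) + (d - c) - (e - c) <= 1 - 1 /\ 1 <= a - c /\ 1 <= d - c).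
  by move=> [h1 [h2 h3]]; apply: N1; split.
have N2' : ~ ((a - c) + (d - c) - (e - c) <= 2 - 1 /\ 2 <= a - c /\ 2 <= d - c).
  by move=> [h1 [h2 h3]]; apply: N2; split.
have Ea : r A = a by []. have Eb : r B = b by []. have Ee : r E = e by [].
have Ec : r [set z] = c by []. have Ed : r (B :|: [set z]) = d by [].
clearbody a b c d e; clear N1 N2.
have Hc : c = 1.
  move: N2' rz1 sBz mB lA a2 b2 sAB; clear => H; intros; destruct c as [|c]; [exfalso; apply H; lia| lia].
revert Ec; subst c; intro Ec.
have Hd : d = b + 1.
  move: N1' sBz mB lA a2 b2 sAB sABz mBzE; clear => H; intros.
  have [hd|hd] := leqP d b; [exfalso; apply H; lia | lia].
revert Ed; subst d; intro Ed.
have Ha : a = 2.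
  move: N2' lA a2 b2 sAB sABz mBzE; clear => H; intros.
  have [ha|ha] := leqP a 2; [lia | exfalso; apply H; lia].
revert Ea; subst a; intro Ea.
have Hb : b + 1 = e.
  have [hb|hb] := leqP e (b + 1); first by move: hb lA b2 sAB; clear; lia.
  exfalso; apply: (Hvc A); split => //; rewrite /lambda -/B ?Ea ?Eb ?Ee; move: hb b2; clear; lia.
have key : forall x, x \in A -> r (B :|: [set x]) = e.
  move=> x xA.
  have xE := hAE x xA.
  have xsE : [set x] \subset E by rewrite sub1set.
  have BxE : B :|: [set x] \subset E by rewrite subUset BE xsE.
  have sBx := R3 _ _ BE xsE.
  have IBx : B :&: [set x] = set0.
    apply/setP=> y; rewrite !inE; case: (eqVneq y x) => [->|]; by rewrite ?xA ?andbF.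
  rewrite IBx r0 in sBx.
  have rx1 : r [set x] <= 1 by have := R1 _ xsE; rewrite cards1.
  have mBx := R2 _ _ (subsetUl B [set x]) BxE.
  case: (eqVneq x z) => [->|xz]; first by rewrite Ed Hb.
  case: (leqP (r (B :|: [set x])) b) => hle; last by move: sBx rx1 Hb hle Eb; clear; lia.
  exfalso.
  have A'E : A :\ x \subset E by apply: subset_trans (subD1set A x) AE.
  have eA' : E :\: (A :\ x) = B :|: [set x].
    apply/setP=> y; rewrite /B !inE; case: (eqVneq y x) => [->|]; rewrite ?xE ?orbT //=.
    by case: (y \in A); rewrite ?andbF ?orbF ?andbT ?orbT.
  have zA' : z \in A :\ x by rewrite !inE eq_sym xz.
  have prA' : A :\ x \proper A by rewrite properD1.
  have m1 : r [set z] <= r (A :\ x) by apply: R2 => //; rewrite sub1set.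
  have m2 := R2 _ _ (subD1set A x) AE.
  rewrite Ec Ea in m1 m2.
  case: (leqP 2 (r (A :\ x))) => h2.
    apply: (Hmin _ prA' zA'); split => //; rewrite /lambda ?eA' ?Ee; move: m2 hle mBx Hb b2 h2 Eb; clear; lia.
  apply: (Hvc (A :\ x)); split => //; rewrite /lambda ?eA' ?Ee; move: m1 hle mBx Hb b2 h2 Eb; clear; lia.
split; last by [].
split => //.
  rewrite /dual_rank -/B Ee Eb.
  have : 0 < #|A| by apply/card_gt0P; exists z.
  move: Hb; clear; lia.
move=> D /properP [DA [x xA xD]].
rewrite /dual_rank.
have xE := hAE x xA.
have DE : D \subset E by apply: subset_trans DA AE.
have sub1 : B :|: [set x] \subset E :\: D.
  apply/subsetP=> y; rewrite /B !inE => /orP [/andP [yA yE] | /eqP ->]; last by rewrite xD xE.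
  rewrite yE andbT; apply: contra yA; exact: (subsetP DA).
have m1 := R2 _ _ sub1 (subsetDl E D).
have m2 := R2 _ _ (subsetDl E D) (subxx E).
rewrite key // in m1; rewrite Ee in m2 *; move: m1 m2; clear; lia.
Qed.
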